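(* Let $0=t_0<\dots<t_N=T$, $\tau_k=t_k-t_{k-1}$, $\tau=\max_k\tau_k$, $r_k=\tau_k/\tau_{k-1}$ ($2\le k\le N$). Let $r_{\max}\approx4.8645$ be the positive root of $x^3=(2x+1)^2$, fix $\delta\in(0,r_{\max})$, assume $r_2>0$ and $0<r_k\le r_{\max}-\delta$ for $3\le k\le N$, and set $c_r=r_{\max}^{5/2}$. Then the DCC kernels satisfy, for $1\le n\le N$, $$p^{(n)}_{n-j}\le c_r\delta^{-1}\sqrt{\tau_j}\sqrt\tau,\qquad 2\le j\le n,$$ $$p^{(n)}_{n-1}\le\tau_1+c_r\delta^{-1}\sqrt{\tau_2}\sqrt\tau.$$
   Context: BDF2 kernels: $b^{(1)}_0=1/\tau_1$; for $n\ge2$, $b^{(n)}_0=\frac{1+2r_n}{\tau_n(1+r_n)}$, $b^{(n)}_1=-\frac{r_n^2}{\tau_n(1+r_n)}$, $b^{(n)}_j=0$ for $2\le j\le n-1$. The discrete complementary convolution (DCC) kernels $p^{(n)}_{n-j}$ ($1\le j\le n$) are defined by $\sum_{j=k}^np^{(n)}_{n-j}b^{(j)}_{j-k}=1$ for all $1\le k\le n$. *)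

(* Defs.v *)
From mathcomp Require Import all_boot all_order all_algebra.
From mathcomp Require Import reals.
Set Implicit Arguments. Unset Strict Implicit. Unset Printing Implicit Defensive.
Import Order.TTheory GRing.Theory Num.Theory.
Local Open Scope ring_scope.

Section Defs.
Variable R : realType.
Variable t : nat -> R.

Definition tau (k : nat) : R := t k - t k.-1.

Definition step_ratio (k : nat) : R := tau k / tau k.-1.

Definition tauMax (N : nat) : R := \big[Num.max/0]_(1 <= k < N.+1) tau k.

Definition bdf2 (n j : nat) : R :=
  if n == 1%N then (if j == 0%N then 1 / tau 1 else 0)
  else if j == 0%N then (1 + 2 * step_ratio n) / (tau n * (1 + step_ratio n))
  else if j == 1%N then - (step_ratio n ^+ 2) / (tau n * (1 + step_ratio n))
  else 0.

(* p n m stands for p^{(n)}_m: DCC kernels are characterized by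
   sum_{j=k}^n p^{(n)}_{n-j} b^{(j)}_{j-k} = 1 for all 1 <= k <= n. *)
Definition is_DCC (N : nat) (p : nat -> nat -> R) : Prop :=
  forall n k : nat, (1 <= k)%N -> (k <= n)%N -> (n <= N)%N ->
    \sum_(k <= j < n.+1) p n (n - j)%N * bdf2 j (j - k)%N = 1.
End Defs.
Arguments tau {R} t k.
Arguments step_ratio {R} t k.
Arguments tauMax {R} t N.
Arguments bdf2 {R} t n j.
Arguments is_DCC {R} t N p.

(* Main.v *)
Require Import Defs.
From mathcomp Require Import all_boot all_order all_algebra.
From mathcomp Require Import reals.
From mathcomp Require Import ring lra zify.
Import Order.TTheory GRing.Theory Num.Theory.
Local Open Scope ring_scope.


Lemma key_ineq (R : realType) (u d s : R) : 0 < u -> u ^+ 3 = 2 * u ^+ 2 + 1 ->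
  0 < d -> 0 <= s -> s ^+ 2 <= u ^+ 2 - d ->
  1 + 2 * s ^+ 2 <= u ^+ 5 / d * (1 + 2 * s ^+ 2 - s ^+ 3).
Proof.
move=> u0 hu d0 s0 hs.
have u2 : 2 < u by nra.
have su : s <= u by nra.
have f : 1 + 2 * s ^+ 2 - s ^+ 3 = (u - s) * (u^+2 + u*s + s^+2 - 2*u - 2*s).
  apply/eqP; rewrite -subr_eq0; apply/eqP.
  have -> : 1 + 2 * s ^+ 2 - s ^+ 3 - (u - s) * (u^+2 + u*s + s^+2 - 2*u - 2*s) = 2 * u^+2 + 1 - u^+3 by ring.
  by rewrite hu subrr.
have h : (u ^+ 2 - s^+2) * (1 + 2 * s ^+ 2) <= u ^+ 5 * (1 + 2 * s ^+ 2 - s ^+ 3).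
  rewrite f.
  have -> : u ^+ 2 - s^+2 = (u - s) * (u + s) by ring.
  rewrite -mulrA [u ^+ 5 * _]mulrCA; apply: ler_wpM2l; first lra.
  have e5 : u ^+ 5 * (u^+2 + u*s + s^+2 - 2*u - 2*s) = u^+4 * (u * s^+2 + u * s * (u - 2) + (u^+3 - 2 * u^+2)) by ring.
  rewrite e5 hu.
  have -> : 2 * u ^+ 2 + 1 - 2 * u ^+ 2 = 1 by ring.
  have u4 : u ^+ 4 >= 16 by nra.
  have a1 : u + s <= u ^+ 4 by nra.
  have a2 : 0 <= u^+4 * (u * s * (u - 2)).
    apply: mulr_ge0; first nra. apply: mulr_ge0; nra.
  have a3 : (u + s) * (2 * s^+2) <= u^+4 * (u * s^+2).
    have : 2 * (u + s) <= u ^+ 4 * u by nra.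
    move=> hh. have ss: 0 <= s^+2 by nra. nra.
  nra.
rewrite mulrAC ler_pdivlMr //.
apply: le_trans h; nra.
Qed.

Lemma step_ineq (R : realType) (C a b sT q q1 r : R) :
 0 < a -> 0 < b -> 0 < r -> a <= sT ->
 q * ((1 + 2*r) / (a^+2 * (1 + r))) + q1 * (- ((b^+2/a^+2) ^+ 2) / (b^+2 * (1 + b^+2/a^+2))) = 1 ->
 q1 * (1 + 2 * (b^+2/a^+2)) <= (1 + b^+2/a^+2) * C * b * sT ->
 1 + 2 * (b/a)^+2 <= C * (1 + 2*(b/a)^+2 - (b/a)^+3) ->
 q * (1 + 2*r) <= (1 + r) * C * a * sT.
Proof.
move=> a0 b0 r0 aT rec IH K.
have s0 : 0 < b / a by rewrite divr_gt0.
move: s0 rec IH K; set s := b / a.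
have -> : b = s * a by rewrite /s mulrVK // unitfE gt_eqF.
have -> : (s * a)^+2 / a^+2 = s^+2.
  by rewrite exprMn mulfK // expf_neq0 // gt_eqF.
clearbody s => s0 rec IH K.
have s2 : 0 < 1 + s^+2 by nra.
have s3 : 0 < 1 + 2 * s^+2 by nra.
have E : q * (1 + 2*r) = (1 + r) * (a^+2 * (q * ((1 + 2*r) / (a^+2 * (1 + r))) + q1 * (- ((s^+2) ^+ 2) / ((s * a)^+2 * (1 + s^+2)))) + q1 * s^+2 / (1 + s^+2)).
  field. by rewrite !gt_eqF //; lra.
rewrite rec mulr1 in E.
have X : q1 * s^+2 / (1 + s^+2) <= C * a * sT * (s^+3 / (1 + 2 * s^+2)).
  have -> : q1 * s^+2 / (1 + s^+2) = (q1 * (1 + 2 * s^+2)) * (s^+2 / ((1 + s^+2) * (1 + 2 * s^+2))).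
    field. rewrite !gt_eqF //.
  apply: le_trans; first (apply: ler_wpM2r; last exact: IH).
    apply: divr_ge0; nra.
  rewrite le_eqVlt; apply/orP; left; apply/eqP; field. by rewrite !gt_eqF //.
have Y : 1 + C * (s^+3 / (1 + 2 * s^+2)) <= C.
  suff : C * s^+3 / (1 + 2 * s^+2) <= C - 1 by rewrite mulrA; lra.
  rewrite ler_pdivrMr //.
  have -> : (C - 1) * (1 + 2 * s ^+ 2) = C * (1 + 2 * s ^+ 2 - s ^+ 3) - (1 + 2 * s ^+ 2) + C * s^+3 by ring.
  lra.
have aa : a^+2 <= a * sT by nra.
have as0 : 0 <= a * sT by nra.
move: X Y E; set KK := s^+3 / (1 + 2 * s^+2); set Q := q1 * s^+2 / (1 + s^+2) => X Y E.
clearbody KK Q.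
have H : a^+2 + Q <= C * a * sT.
  have : C * (a * sT) >= a * sT * (1 + C * KK) by nra.
  nra.
rewrite E. nra.
Qed.

Lemma rec_k {R : realType} {t : nat -> R} {N p n k} : is_DCC t N p -> (1 <= k)%N -> (k < n)%N -> (n <= N)%N ->
  p n (n - k)%N * bdf2 t k 0 + p n (n - k.+1)%N * bdf2 t k.+1 1 = 1.
Proof.
move=> H k1 kn nN. have := H n k k1 (ltnW kn) nN.
rewrite big_ltn; last lia. rewrite big_ltn; last lia.
rewrite subnn subSnn big_nat_cond big1 ?addr0 ?addrA //.
move=> j /andP[/andP[hj _] _].
have h0 : (j - k == 0)%N = false by apply/eqP; lia.
have h1 : (j - k == 1)%N = false by apply/eqP; lia.
rewrite /bdf2 h0 h1 /=; case: (j == 1)%N; by rewrite mulr0.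
Qed.

Lemma rec_n {R : realType} {t : nat -> R} {N p n} : is_DCC t N p -> (1 <= n)%N -> (n <= N)%N ->
  p n 0%N * bdf2 t n 0 = 1.
Proof.
move=> H n1 nN. have := H n n n1 (leqnn n) nN.
by rewrite big_ltn // big_geq // subnn addr0.
Qed.

Lemma tau_le_max (R : realType) (t : nat -> R) N k : (1 <= k <= N)%N -> tau t k <= tauMax t N.
Proof.
move=> hk; rewrite /tauMax.
apply: (le_bigmax_seq _ k) => //. rewrite mem_index_iota; lia.
Qed.

Lemma base_ineq (R : realType) (C tk sT q r : R) : 0 < tk -> 0 < r -> 1 <= C ->
  Num.sqrt tk <= sT -> q * ((1 + 2*r) / (tk * (1 + r))) = 1 ->
  q * (1 + 2*r) <= (1 + r) * C * Num.sqrt tk * sT.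
Proof.
move=> t0 r0 C1 aT rec.
have E : q * (1 + 2*r) = (q * ((1 + 2*r) / (tk * (1 + r)))) * (tk * (1 + r)).
  field. rewrite !gt_eqF //; lra.
rewrite rec mul1r in E; rewrite E.
have a0 : 0 < Num.sqrt tk by rewrite sqrtr_gt0.
have ta : tk = Num.sqrt tk * Num.sqrt tk by rewrite -expr2 sqr_sqrtr // ltW.
move: aT a0 ta; set a := Num.sqrt tk => aT a0 ta.
clearbody a. subst tk.
have h1 : a * a <= a * sT by nra.
have h2 : a * sT <= C * a * sT by nra.
nra.
Qed.

Lemma first_ineq (R : realType) (t1 t2 q1 q2 X : R) : 0 < t1 -> 0 < t2 ->
  q1 * (1 / t1) + q2 * (- ((t2 / t1) ^+ 2) / (t2 * (1 + t2 / t1))) = 1 ->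
  q2 <= X -> 0 <= X -> q1 <= t1 + X.
Proof.
move=> t10 t20 rec hq hX.
have r0 : 0 < t2 / t1 by rewrite divr_gt0.
have E : q1 = t1 * (q1 * (1 / t1) + q2 * (- ((t2 / t1) ^+ 2) / (t2 * (1 + t2 / t1)))) + q2 * ((t2/t1) / (1 + t2/t1)).
  field. rewrite !gt_eqF //; lra.
rewrite rec mulr1 in E; rewrite E.
have w0 : 0 < (t2/t1) / (1 + t2/t1) by rewrite divr_gt0 //; lra.
have w1 : (t2/t1) / (1 + t2/t1) < 1 by rewrite ltr_pdivrMr; lra.
move: w0 w1; set w := (t2/t1) / (1 + t2/t1) => w0 w1.
nra.
Qed.

Lemma fin_ineq (R : realType) (q r C a s : R) : 0 < r -> 0 <= C * a * s ->
  q * (1 + 2 * r) <= (1 + r) * C * a * s -> q <= C * a * s.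
Proof.
move=> r0; have -> : (1 + r) * C * a * s = (1 + r) * (C * a * s) by ring.
move: (C * a * s) => X X0 H. nra.
Qed.

Ltac nlia R := repeat match goal with H : ?T |- _ => lazymatch T with context[R] => clear H end end; lia.

Theorem mainTheorem6 (R : realType) (N : nat) (t : nat -> R) (T : R)
    (rmax delta : R) (p : nat -> nat -> R) :
  t 0%N = 0 ->
  (forall k : nat, (1 <= k <= N)%N -> t k.-1 < t k) ->
  t N = T ->
  0 < rmax -> rmax ^+ 3 = (2 * rmax + 1) ^+ 2 ->
  0 < delta -> delta < rmax ->
  ((2 <= N)%N -> 0 < step_ratio t 2) ->
  (forall k : nat, (3 <= k <= N)%N -> 0 < step_ratio t k /\ step_ratio t k <= rmax - delta) ->
  is_DCC t N p ->
  let c_r := rmax ^+ 2 * Num.sqrt rmax in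
  forall n : nat, (1 <= n <= N)%N ->
    (forall j : nat, (2 <= j <= n)%N ->
       p n (n - j)%N <= c_r / delta * Num.sqrt (tau t j) * Num.sqrt (tauMax t N)) /\
    p n (n - 1)%N <= tau t 1 + c_r / delta * Num.sqrt (tau t 2) * Num.sqrt (tauMax t N).
Proof.
move=> t0 Hinc tN rpos Hr3 dpos dlt Hr2 Hrk Hdcc cr n /andP[n1 nN].
have tpos : forall k, (1 <= k <= N)%N -> 0 < tau t k.
  by move=> k hk; rewrite /tau subr_gt0; apply: Hinc.
set sT := Num.sqrt (tauMax t N).
have asT : forall k, (1 <= k <= N)%N -> Num.sqrt (tau t k) <= sT.
  move=> k hk; rewrite ler_sqrt; first exact: tau_le_max.
  exact: (le_trans (ltW (tpos k hk)) (@tau_le_max R t N k hk)).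
set u := Num.sqrt rmax.
have u0 : 0 < u by rewrite sqrtr_gt0.
have u2 : u ^+ 2 = rmax by rewrite sqr_sqrtr // ltW.
have u3 : u ^+ 3 = 2 * u ^+ 2 + 1.
  have h6 : (u^+3)^+2 = (2*u^+2+1)^+2 by rewrite -exprM mulnC exprM u2 Hr3.
  have : (u^+3 - (2*u^+2+1)) * (u^+3 + (2*u^+2+1)) = 0 by rewrite -subr_sqr h6 subrr.
  have pos : u^+3 + (2*u^+2+1) != 0 by rewrite gt_eqF //; nra.
  move/eqP; rewrite mulf_eq0 (negbTE pos) orbF subr_eq0 => /eqP //.
have crE : cr = u ^+ 5.
  rewrite /cr -/u -u2 -exprM -exprSr //.
set C := cr / delta.
have C1 : 1 <= C.
  rewrite /C crE ler_pdivlMr // mul1r.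
  have : u ^+ 5 = u ^+ 2 * u ^+ 3 by rewrite -exprD.
  move=> ->; rewrite u3. nra.
have rpos2 : forall k, (2 <= k <= N)%N -> 0 < step_ratio t k.
  move=> k hk; rewrite /step_ratio divr_gt0 //; apply: tpos; nlia R.
have P : forall m, (m + 2 <= n)%N ->
    p n (n - (n - m))%N * (1 + 2 * step_ratio t (n - m)) <=
    (1 + step_ratio t (n - m)) * C * Num.sqrt (tau t (n - m)) * sT.
  elim=> [|m IH] hm.
    rewrite subn0 subnn.
    have hn : (1 <= n <= N)%N by nlia R.
    apply: base_ineq => //; first exact: tpos; first (apply: rpos2; nlia R); first exact: asT.
    have := rec_n Hdcc n1 nN.
    have n2 : (n == 1)%N = false by apply/eqP; nlia R.
    by rewrite /bdf2 n2 /=.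
  set k := (n - m.+1)%N.
  have ek : k.+1 = (n - m)%N by rewrite /k; nlia R.
  have k2 : (2 <= k)%N by rewrite /k; nlia R.
  have IH' := IH (ltnW hm). rewrite -ek in IH'.
  have ekk : (n - (n - m.+1))%N = (m.+1)%N by nlia R.
  have ekk1 : (n - k.+1)%N = m by rewrite ek; nlia R.
  have hk : (1 <= k <= N)%N by rewrite /k; nlia R.
  have hk1 : (1 <= k.+1 <= N)%N by rewrite /k; nlia R.
  have tk0 := tpos k hk. have tk10 := tpos k.+1 hk1.
  have g0 := ltW tk0. have g1 := ltW tk10.
  rewrite -/k.
  apply: (@step_ineq R C (Num.sqrt (tau t k)) (Num.sqrt (tau t k.+1)) sT _ (p n (n - k.+1)%N)).
  - by rewrite sqrtr_gt0.
  - by rewrite sqrtr_gt0.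
  - apply: rpos2; nlia R.
  - exact: asT.
  - rewrite !sqr_sqrtr //.
    have kn : (k < n)%N by rewrite /k; nlia R.
    have := rec_k Hdcc (ltnW k2) kn nN.
    have k1 : (k == 1)%N = false by apply/eqP; nlia R.
    have k11 : (k.+1 == 1)%N = false by apply/eqP; nlia R.
    by rewrite /bdf2 k1 k11 /= /step_ratio /=.
  - by rewrite !sqr_sqrtr //.
  - rewrite /C crE.
    apply: key_ineq => //.
      by apply: divr_ge0; apply: sqrtr_ge0.
    rewrite expr_div_n !sqr_sqrtr //; last exact: ltW.
    have [_ hr] := Hrk k.+1 ltac:(nlia R). by move: hr; rewrite /step_ratio /=.
split.
  move=> j /andP[j2 jn].
  have e : (n - (n - j))%N = j by nlia R.
  have := P (n - j)%N ltac:(nlia R). rewrite e.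
  have r0 : 0 < step_ratio t j by apply: rpos2; nlia R.
  have X0 : 0 <= C * Num.sqrt (tau t j) * sT.
    apply: mulr_ge0; last exact: sqrtr_ge0. apply: mulr_ge0; last exact: sqrtr_ge0. lra.
  by move=> H; apply: fin_ineq r0 X0 H.
have X0 : 0 <= C * Num.sqrt (tau t 2) * sT.
  apply: mulr_ge0; last exact: sqrtr_ge0. apply: mulr_ge0; last exact: sqrtr_ge0. lra.
case: (ltngtP n 1) => [|n1'|->]; first nlia R.
  have e : (n - (n - 2))%N = 2%N by nlia R.
  have := P (n - 2)%N ltac:(nlia R). rewrite e.
  have r0 : 0 < step_ratio t 2 by apply: rpos2; nlia R.
  move=> H.
  have H2 : p n (n - 2)%N <= C * Num.sqrt (tau t 2) * sT.
    exact: fin_ineq r0 X0 H.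
  have h1 : (1 <= 1 <= N)%N by nlia R.
  have h2 : (1 <= 2 <= N)%N by nlia R.
  apply: (@first_ineq R (tau t 1) (tau t 2) _ _ _ (tpos 1%N h1) (tpos 2%N h2) _ H2 X0).
  have := rec_k Hdcc (k:=1) (leqnn 1) n1' nN.
  by rewrite /bdf2 /= /step_ratio /=.
have n1N : (1 <= N)%N by nlia R.
have := rec_n Hdcc (leqnn 1) n1N.
rewrite /bdf2 /= subnn mul1r => h.
have t10 : 0 < tau t 1 by apply: tpos; nlia R.
have : p 1%N 0%N = tau t 1.
  have E : p 1%N 0%N = (p 1%N 0%N * (tau t 1)^-1) * tau t 1 by rewrite mulfVK // gt_eqF.
  by rewrite E h mul1r.
move=> ->. lra.
Qed.
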